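(* Define the pre-sum $A\boxplus B$ of two triangles $A=A_1A_2A_3$, $B=B_1B_2B_3$ in the real projective plane as follows. If $A$ and $B$ are perspective from a point $S$ (the lines $A_iB_i$ all pass through $S$), then $A\boxplus B=C_1C_2C_3$ where, for every permutation $(i,j,k)$ of $(1,2,3)$, $P_{ij}=A_iA_k\cap B_jB_k$ and $C_k=P_{ik}P_{ki}\cap P_{jk}P_{kj}$. If $A$ and $B$ are perspective from a line $s$ (the points $A_kA_j\cap B_kB_j$ all lie on $s$), then $A\boxplus B=C_1C_2C_3$ with $C_k=A_iB_j\cap A_jB_i$ for every permutation $(i,j,k)$. Then, whenever the constructions involved are well defined (general position): (1) $A\boxplus B=B\boxplus A$; (2) if $A\boxplus B=C$, then $A\boxplus C=B$ and $B\boxplus C=A$. *)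

(* Defs.v *)
(* Real projective plane in homogeneous coordinates:
   points and lines are nonzero row vectors of R^3 (R : realType), taken up
   to a nonzero scalar. *)
From HB Require Import structures.
From mathcomp Require Import all_boot all_order all_algebra.
From mathcomp Require Import all_classical all_reals.
Set Implicit Arguments. Unset Strict Implicit. Unset Printing Implicit Defensive.
Import Order.TTheory GRing.Theory Num.Theory.
Local Open Scope ring_scope.

Section Proj.
Variable R : realType.

Definition vec3 := 'rV[R]_3.

Definition cross (u v : vec3) : vec3 :=
  \row_(k < 3) (u 0 (ordS k) * v 0 (ordS (ordS k))
                - u 0 (ordS (ordS k)) * v 0 (ordS k)).

Definition dot (u v : vec3) : R := \sum_(i < 3) u 0 i * v 0 i.

(* line through two points / intersection point of two lines;
   the result is 0 exactly when the two arguments do not determine a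
   unique line / point (coincident or undefined inputs). *)
Definition join (P Q : vec3) : vec3 := cross P Q.
Definition meet (l m : vec3) : vec3 := cross l m.

Definition incident (P l : vec3) : Prop := dot P l = 0.

Definition proj_eq (u v : vec3) : Prop := u != 0 /\ v != 0 /\ cross u v = 0.

Definition triangle := 'I_3 -> vec3.

Definition is_triangle (A : triangle) : Prop := \det (\matrix_(i < 3) A i) != 0.

Definition distinct3 (i j k : 'I_3) : Prop := [/\ i != j, j != k & i != k].

Definition persp_point (A B : triangle) : Prop :=
  exists S : vec3, S != 0 /\
    forall i, join (A i) (B i) != 0 /\ incident S (join (A i) (B i)).

Definition persp_line (A B : triangle) : Prop :=
  exists s : vec3, s != 0 /\
    forall j k, j != k ->
      meet (join (A k) (A j)) (join (B k) (B j)) != 0 /\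
      incident (meet (join (A k) (A j)) (join (B k) (B j))) s.

Definition Ppt (A B : triangle) (a b c : 'I_3) : vec3 :=
  meet (join (A a) (A c)) (join (B b) (B c)).

(* case "perspective from a point", for the permutation (i,j,k):
   C_k = P_{ik}P_{ki} /\ P_{jk}P_{kj} *)
Definition constr_point (A B : triangle) (i j k : 'I_3) : vec3 :=
  meet (join (Ppt A B i k j) (Ppt A B k i j))
       (join (Ppt A B j k i) (Ppt A B k j i)).

Definition constr_line (A B : triangle) (i j k : 'I_3) : vec3 :=
  meet (join (A i) (B j)) (join (A j) (B i)).

(* Since cross u 0 = cross 0 u = 0, the final vector being
   nonzero forces every intermediate join/meet to be well defined. *)
Definition presum_point (A B C : triangle) : Prop :=
  [/\ is_triangle A, is_triangle B, persp_point A B &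
      forall i j k, distinct3 i j k -> proj_eq (C k) (constr_point A B i j k)].

Definition presum_line (A B C : triangle) : Prop :=
  [/\ is_triangle A, is_triangle B, persp_line A B &
      forall i j k, distinct3 i j k -> proj_eq (C k) (constr_line A B i j k)].

End Proj.

(* Main.v *)
Require Import Defs.
From HB Require Import structures.
From mathcomp Require Import all_boot all_order all_algebra.
From mathcomp Require Import all_classical all_reals.
From mathcomp Require Import ring.
Import Order.TTheory GRing.Theory Num.Theory.
Local Open Scope ring_scope.

Lemma ord3P (l : 'I_3) : [\/ l = 0, l = 1 | l = 2].
Proof.
case: l => [[|[|[|m]]] Hm] //.
- by apply: Or31; apply/val_inj.
- by apply: Or32; apply/val_inj.
- by apply: Or33; apply/val_inj.
Qed.

Lemma vec_eq {R : realType} (u v : vec3 R) :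
  u 0 0 = v 0 0 -> u 0 1 = v 0 1 -> u 0 2 = v 0 2 -> u = v.
Proof.
move=> h0 h1 h2; apply/rowP => l.
by case: (ord3P l) => ->.
Qed.

Lemma crossE0 {R : realType} (u v : vec3 R) :
  cross u v 0 0 = u 0 1 * v 0 2 - u 0 2 * v 0 1.
Proof. by rewrite /cross mxE; congr (_ * _ - _ * _); congr (_ _ _); apply/val_inj. Qed.
Lemma crossE1 {R : realType} (u v : vec3 R) :
  cross u v 0 1 = u 0 2 * v 0 0 - u 0 0 * v 0 2.
Proof. by rewrite /cross mxE; congr (_ * _ - _ * _); congr (_ _ _); apply/val_inj. Qed.
Lemma crossE2 {R : realType} (u v : vec3 R) :
  cross u v 0 2 = u 0 0 * v 0 1 - u 0 1 * v 0 0.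
Proof. by rewrite /cross mxE; congr (_ * _ - _ * _); congr (_ _ _); apply/val_inj. Qed.

Lemma dotE {R : realType} (u v : vec3 R) :
  dot u v = u 0 0 * v 0 0 + u 0 1 * v 0 1 + u 0 2 * v 0 2.
Proof.
rewrite /dot !big_ord_recr big_ord0 /= add0r.
by congr (_ * _ + _ * _ + _ * _); congr (_ _ _); apply/val_inj.
Qed.

Lemma ordS0 : ordS (0 : 'I_3) = 1. Proof. by apply/val_inj. Qed.
Lemma ordS1 : ordS (1 : 'I_3) = 2. Proof. by apply/val_inj. Qed.
Lemma ordS2 : ordS (2 : 'I_3) = 0. Proof. by apply/val_inj. Qed.

Ltac vsolve := apply: vec_eq; rewrite ?dotE; rewrite ?mxE; rewrite ?dotE ?mxE;
  repeat (rewrite ordS0 || rewrite ordS1 || rewrite ordS2); ring.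

Lemma cross_anti {R : realType} (u v : vec3 R) : cross v u = - cross u v.
Proof. vsolve. Qed.
Lemma cross_oppl {R : realType} (u v : vec3 R) : cross (- u) v = - cross u v.
Proof. vsolve. Qed.
Lemma cross_oppr {R : realType} (u v : vec3 R) : cross u (- v) = - cross u v.
Proof. vsolve. Qed.
Lemma cross_scalel {R : realType} (c : R) (u v : vec3 R) : cross (c *: u) v = c *: cross u v.
Proof. vsolve. Qed.
Lemma cross_scaler {R : realType} (c : R) (u v : vec3 R) : cross u (c *: v) = c *: cross u v.
Proof. vsolve. Qed.
Lemma cross0r {R : realType} (u : vec3 R) : cross u 0 = 0.
Proof. vsolve. Qed.
Lemma cross_self {R : realType} (u : vec3 R) : cross u u = 0.
Proof. vsolve. Qed.
Lemma dot_oppr {R : realType} (u v : vec3 R) : dot u (- v) = - dot u v.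
Proof. rewrite !dotE !mxE; ring. Qed.
Lemma dot_oppl {R : realType} (u v : vec3 R) : dot (- u) v = - dot u v.
Proof. rewrite !dotE !mxE; ring. Qed.
(* two points on a line l *)
Lemma K1 {R : realType} (p q l : vec3 R) :
  cross (cross p l) (cross q l) = dot p (cross q l) *: l.
Proof. vsolve. Qed.
Lemma K2 {R : realType} (a b r : vec3 R) :
  cross a (cross (cross a b) r) = dot a r *: cross a b.
Proof. vsolve. Qed.
Lemma K3 {R : realType} (a m b : vec3 R) :
  cross a (cross m (cross a b)) = - dot a m *: cross a b.
Proof. vsolve. Qed.
Lemma cross_vv {R : realType} (u v : vec3 R) :
  cross v (cross u v) = dot v v *: u - dot v u *: v.
Proof. vsolve. Qed.

Definition mul_of {R : realType} (u v : vec3 R) := exists c : R, u = c *: v.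

Lemma mul_refl {R : realType} (u : vec3 R) : mul_of u u.
Proof. by exists 1; rewrite scale1r. Qed.
Lemma mul_trans {R : realType} {u v w : vec3 R} : mul_of u v -> mul_of v w -> mul_of u w.
Proof. by move=> [a ->] [b ->]; exists (a * b); rewrite scalerA. Qed.
Lemma mul_scale {R : realType} (c : R) (u : vec3 R) : mul_of (c *: u) u.
Proof. by exists c. Qed.
Lemma mul_opp {R : realType} (u : vec3 R) : mul_of (- u) u.
Proof. by exists (-1); rewrite scaleN1r. Qed.
Lemma mul_cross {R : realType} {u u' v v' : vec3 R} :
  mul_of u u' -> mul_of v v' -> mul_of (cross u v) (cross u' v').
Proof.
move=> [a ->] [b ->]; exists (a * b).
by rewrite cross_scalel cross_scaler scalerA.
Qed.
Lemma mul_eqr {R : realType} (u v w : vec3 R) : mul_of u v -> v = w -> mul_of u w.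
Proof. by move=> h <-. Qed.

Lemma dot_self_eq0 {R : realType} (v : vec3 R) : dot v v = 0 -> v = 0.
Proof.
rewrite dotE => /eqP h.
have s0 : 0 <= v 0 0 * v 0 0 by rewrite -expr2 sqr_ge0.
have s1 : 0 <= v 0 1 * v 0 1 by rewrite -expr2 sqr_ge0.
have s2 : 0 <= v 0 2 * v 0 2 by rewrite -expr2 sqr_ge0.
move: h; rewrite paddr_eq0 ?addr_ge0 // paddr_eq0 //.
rewrite !mulf_eq0 !orbb => /andP [/andP [/eqP h0 /eqP h1] /eqP h2].
by apply: vec_eq; rewrite mxE.
Qed.

Lemma proj_mul {R : realType} (u v : vec3 R) : cross u v = 0 -> v != 0 -> mul_of u v.
Proof.
move=> h nz.
have dvv : dot v v != 0 by apply/eqP => /dot_self_eq0 /eqP; apply/negP.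
exists (dot v u / dot v v).
have := cross_vv u v; rewrite h cross0r => /eqP.
rewrite eq_sym subr_eq0 => /eqP e.
by rewrite -{1}(scalerK dvv u) e scalerA mulrC.
Qed.

Lemma mul_cross0 {R : realType} (u v : vec3 R) : mul_of u v -> cross v u = 0.
Proof. by move=> [c ->]; rewrite cross_scaler cross_self scaler0. Qed.

Lemma d3perm {x y z : 'I_3} : distinct3 x y z ->
  [/\ distinct3 x z y, distinct3 y x z, distinct3 y z x, distinct3 z x y
    & distinct3 z y x].
Proof.
case=> a b c; split; split => //; by rewrite eq_sym.
Qed.

Definition Lp {R : realType} (A B : triangle R) (p q r : 'I_3) : vec3 R :=
  cross (Ppt A B p q r) (Ppt A B q p r).
Definition Tp {R : realType} (A B : triangle R) (x y z : 'I_3) : vec3 R :=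
  cross (cross (A x) (A z)) (cross (B y) (B x)).

Lemma S1 {R : realType} {A B C : triangle R}
  (HC : forall i j k, distinct3 i j k -> mul_of (C k) (constr_point A B i j k))
  {x y z : 'I_3} (d : distinct3 x y z) : mul_of (cross (C y) (C z)) (Lp A B z y x).
Proof.
move: HC d => HC d; have [dxzy _ _ _ _] := d3perm d.
apply: mul_trans (mul_cross (HC _ _ _ dxzy) (HC _ _ _ d)) _.
rewrite /constr_point /meet /join /Lp.
rewrite (cross_anti (Ppt A B z y x) (Ppt A B y z x)) !cross_oppr K1.
apply: mul_trans (mul_opp _) (mul_scale _ _).
Qed.

Lemma S2 {R : realType} {A B C : triangle R}
  (HC : forall i j k, distinct3 i j k -> mul_of (C k) (constr_point A B i j k))
  {x y z : 'I_3} (d : distinct3 x y z) : mul_of (Ppt A C x y z) (Tp A B x y z).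
Proof.
move: HC d => HC d.
apply: mul_trans (mul_cross (mul_refl (cross (A x) (A z))) (S1 HC d)) _.
rewrite /Lp /Ppt /meet /join /Tp.
rewrite (cross_anti (A x) (A z)) !cross_oppl cross_oppr K2.
apply: mul_trans (mul_opp _) (mul_scale _ _).
Qed.

Lemma S3 {R : realType} {A B C : triangle R}
  (HC : forall i j k, distinct3 i j k -> mul_of (C k) (constr_point A B i j k))
  {x y z : 'I_3} (d : distinct3 x y z) : mul_of (Lp A C x y z) (cross (B x) (B y)).
Proof.
move: HC d => HC d; have [_ dyxz _ _ _] := d3perm d.
apply: mul_trans (mul_cross (S2 HC d) (S2 HC dyxz)) _.
rewrite /Tp (cross_anti (B x) (B y)) cross_oppr cross_oppl K1.
apply: mul_trans (mul_opp _) (mul_scale _ _).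
Qed.

Lemma point_main {R : realType} (A B C : triangle R) :
  (forall i j k, distinct3 i j k -> mul_of (C k) (constr_point A B i j k)) ->
  forall i j k, distinct3 i j k -> mul_of (constr_point A C i j k) (B k).
Proof.
move=> HC i j k d; have [dikj _ _ _ _] := d3perm d.
have [_ _ _ _ djki] := d3perm dikj.
change (mul_of (cross (Lp A C i k j) (Lp A C j k i)) (B k)).
apply: mul_trans (mul_cross (S3 HC dikj) (S3 HC djki)) _.
rewrite K1; exact: mul_scale.
Qed.

Lemma line_main {R : realType} (A B C : triangle R) :
  (forall i j k, distinct3 i j k -> mul_of (C k) (constr_line A B i j k)) ->
  forall i j k, distinct3 i j k -> mul_of (constr_line A C i j k) (B k).
Proof.
move=> HC i j k d; have [_ _ djki dkij _] := d3perm d.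
have s1 : mul_of (cross (A i) (C j)) (cross (A i) (B k)).
  apply: mul_trans (mul_cross (mul_refl (A i)) (HC _ _ _ dkij)) _.
  rewrite /constr_line /meet /join K3; exact: mul_scale.
have s2 : mul_of (cross (A j) (C i)) (cross (A j) (B k)).
  apply: mul_trans (mul_cross (mul_refl (A j)) (HC _ _ _ djki)) _.
  rewrite /constr_line /meet /join K2; exact: mul_scale.
apply: mul_trans (mul_cross s1 s2) _.
rewrite K1; exact: mul_scale.
Qed.

Lemma PptBA {R : realType} (A B : triangle R) a b c :
  Ppt B A a b c = - Ppt A B b a c.
Proof. exact: cross_anti. Qed.

Lemma constr_point_sym {R : realType} (A B : triangle R) i j k :
  constr_point B A i j k = constr_point A B i j k.
Proof.
rewrite /constr_point /meet /join (PptBA A B i k j) (PptBA A B k i j)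
  (PptBA A B j k i) (PptBA A B k j i).
rewrite !cross_oppl !cross_oppr !opprK.
by rewrite (cross_anti (Ppt A B i k j) (Ppt A B k i j))
  (cross_anti (Ppt A B j k i) (Ppt A B k j i)) !cross_oppl !cross_oppr !opprK.
Qed.

Lemma constr_line_sym {R : realType} (A B : triangle R) i j k :
  constr_line B A i j k = - constr_line A B i j k.
Proof.
rewrite /constr_line /meet /join (cross_anti (A j) (B i)) (cross_anti (A i) (B j)).
rewrite cross_oppl cross_oppr opprK.
by rewrite (cross_anti (cross (A i) (B j)) (cross (A j) (B i))).
Qed.

Lemma persp_point_sym {R : realType} (A B : triangle R) :
  persp_point A B -> persp_point B A.
Proof.
case=> S [nz h]; exists S; split => // i; have [n inc] := h i.
rewrite /join (cross_anti (A i) (B i)) oppr_eq0; split => //.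
by rewrite /incident dot_oppr inc oppr0.
Qed.

Lemma persp_line_sym {R : realType} (A B : triangle R) :
  persp_line A B -> persp_line B A.
Proof.
case=> s [nz h]; exists s; split => // j k jk; have [n inc] := h j k jk.
rewrite /meet (cross_anti (join (A k) (A j)) (join (B k) (B j))) oppr_eq0.
split => //.
by rewrite /incident dot_oppl inc oppr0.
Qed.

Lemma row_nz {R : realType} (B : triangle R) k : is_triangle B -> B k != 0.
Proof.
move=> tB; apply/eqP => h; move: tB; rewrite /is_triangle (expand_det_row _ k).
rewrite big1 ?eqxx // => j _; rewrite mxE h mxE mul0r //.
Qed.

Lemma point_part1 {R : realType} {A B C : triangle R} :
  presum_point A B C -> presum_point B A C.
Proof.
case=> tA tB p h; split => //; first exact: persp_point_sym.
by move=> i j k d; rewrite constr_point_sym; exact: h.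
Qed.

Lemma point_part2 {R : realType} {A B C D : triangle R} :
  presum_point A B C -> presum_point A C D -> presum_point A C B.
Proof.
case=> tA tB pAB hC [_ tC pAC hD]; split => // i j k d.
have HC : forall i j k, distinct3 i j k -> mul_of (C k) (constr_point A B i j k).
  by move=> i' j' k' d'; have [nz [nz' c]] := hC i' j' k' d'; exact: proj_mul.
have [_ [nz _]] := hD i j k d.
split; first exact: row_nz.
split => //; apply: mul_cross0; exact: (@point_main _ _ _ _ HC _ _ _ d).
Qed.

Lemma line_part1 {R : realType} {A B C : triangle R} :
  presum_line A B C -> presum_line B A C.
Proof.
case=> tA tB p h; split => //; first exact: persp_line_sym.
move=> i j k d; rewrite constr_line_sym; have [nz [nz' c]] := h i j k d.
by split => //; rewrite oppr_eq0; split => //; rewrite cross_oppr c oppr0.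
Qed.

Lemma line_part2 {R : realType} {A B C D : triangle R} :
  presum_line A B C -> presum_line A C D -> presum_line A C B.
Proof.
case=> tA tB pAB hC [_ tC pAC hD]; split => // i j k d.
have HC : forall i j k, distinct3 i j k -> mul_of (C k) (constr_line A B i j k).
  by move=> i' j' k' d'; have [nz [nz' c]] := hC i' j' k' d'; exact: proj_mul.
have [_ [nz _]] := hD i j k d.
split; first exact: row_nz.
split => //; apply: mul_cross0; exact: (@line_main _ _ _ _ HC _ _ _ d).
Qed.

Theorem lemma1 (R : realType) :
  (forall A B C : triangle R,
     presum_point A B C ->
     [/\ presum_point B A C,
         (exists D, presum_point A C D) -> presum_point A C B &
         (exists D, presum_point B C D) -> presum_point B C A]) /\
  (forall A B C : triangle R,
     presum_line A B C ->
     [/\ presum_line B A C,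
         (exists D, presum_line A C D) -> presum_line A C B &
         (exists D, presum_line B C D) -> presum_line B C A]).
Proof.
split=> A B C h; split.
- exact: point_part1.
- by case=> D hD; exact: (point_part2 h hD).
- by case=> D hD; exact: (point_part2 (point_part1 h) hD).
- exact: line_part1.
- by case=> D hD; exact: (line_part2 h hD).
- by case=> D hD; exact: (line_part2 (line_part1 h) hD).
Qed.
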